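(* Let $X$ be an infinite compact metrizable space, $h\colon X\to X$ a minimal homeomorphism, and suppose $(X,h)$ has the topological small boundary property. Let $\varepsilon>0$. (1) For any open $U\subset X$ with $\partial U$ universally null, there is an open $V\subset X$ with $\overline{V}\subset U$, $\partial V$ topologically $h$-small, and $\mu(U\setminus\overline{V})<\varepsilon$ for all $\mu\in M_h(X)$. (2) For any open $U\subset X$ and any closed $F\subset U$ with $\partial F$ universally null, there is an open $V\subset X$ with $F\subset V\subset\overline{V}\subset U$, $\partial V$ topologically $h$-small, and $\mu(V\setminus F)<\varepsilon$ for all $\mu\in M_h(X)$. (3) For any closed $F\subset X$ with $\partial F$ universally null, there is an open $V\subset X$ with $F\subset V$, $\partial V$ topologically $h$-small, and $\mu(V\setminus F)<\varepsilon$ for all $\mu\in M_h(X)$.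
   Context: $M_h(X)$ denotes the set of $h$-invariant Borel probability measures on $X$; a Borel set is universally null if it has measure $0$ for all $\mu\in M_h(X)$; $\partial A$ is the boundary of $A$. A closed set $F\subset X$ is topologically $h$-small if there is $m\in\mathbb{Z}_{+}$ such that whenever $d(0),\dots,d(m)$ are $m+1$ distinct integers, $h^{d(0)}(F)\cap\cdots\cap h^{d(m)}(F)=\varnothing$. $(X,h)$ has the topological small boundary property if whenever $F,K\subset X$ are disjoint compact sets, there exist open sets $U,V\subset X$ with $F\subset U$, $K\subset V$, $\overline{U}\cap\overline{V}=\varnothing$ and $\partial U$ topologically $h$-small. *)

(* Defs.v *)
From HB Require Import structures.
From mathcomp Require Import all_boot all_order all_algebra.
From mathcomp Require Import all_classical all_reals all_analysis.
Set Implicit Arguments. Unset Strict Implicit. Unset Printing Implicit Defensive.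
Import Order.TTheory GRing.Theory Num.Theory.
Local Open Scope classical_set_scope.
Local Open Scope ring_scope.

Notation borel X := (g_sigma_algebraType (@open X%type)).

Definition boundary (X : ptopologicalType) (A : set X) : set X :=
  closure A `\` interior A.

Definition zpow (X : Type) (h g : X -> X) (n : int) : X -> X :=
  match n with
  | Posz k => iter k h
  | Negz k => iter k.+1 g
  end.

Definition is_homeo (X : ptopologicalType) (h g : X -> X) : Prop :=
  cancel h g /\ cancel g h /\ continuous h /\ continuous g.

Definition minimal_homeo (X : ptopologicalType) (h g : X -> X) : Prop :=
  forall x : X, closure [set zpow h g n x | n in [set: int]] = [set: X].

Definition invariant_prob (R : realType) (X : ptopologicalType) (h : X -> X)
    (mu : probability (borel X) R) : Prop :=
  forall A : set (borel X), measurable A -> mu (h @^-1` A) = mu A.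

Definition universally_null (R : realType) (X : ptopologicalType) (h : X -> X)
    (A : set X) : Prop :=
  measurable (A : set (borel X)) /\
  forall mu : probability (borel X) R, invariant_prob h mu -> mu A = 0%E.

Definition topo_small (X : ptopologicalType) (h g : X -> X) (F : set X) : Prop :=
  closed F /\
  exists m : nat, forall d : 'I_m.+1 -> int, injective d ->
    \bigcap_(i in [set: 'I_m.+1]) (zpow h g (d i) @` F) = set0.

Definition TSBP (X : ptopologicalType) (h g : X -> X) : Prop :=
  forall F K : set X, compact F -> compact K -> F `&` K = set0 ->
    exists U V : set X, [/\ open U /\ open V, F `<=` U, K `<=` V,
      closure U `&` closure V = set0 & topo_small h g (boundary U)].

(* Main.v *)
Require Import Defs.
From HB Require Import structures.
From mathcomp Require Import all_boot all_order all_algebra.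
From mathcomp Require Import all_classical all_reals all_analysis.
From mathcomp Require Import lra.
Import Order.TTheory GRing.Theory Num.Theory.
Local Open Scope classical_set_scope.
Local Open Scope ring_scope.
Set Implicit Arguments. Unset Strict Implicit. Unset Printing Implicit Defensive.
Section Construction.
Context (R : realType) (X : ptopologicalType).
Hypothesis XT : compact [set: X].
Variable L : set X -> R.
Hypothesis L0 : forall K, closed K -> 0 <= L K.
Hypothesis Lmono : forall A B, closed A -> closed B -> A `<=` B -> L A <= L B.
Hypothesis Ladd : forall A B, closed A -> closed B -> A `&` B = set0 ->
  L (A `|` B) = L A + L B.
Hypothesis Lsub : forall A B, closed A -> closed B -> L (A `|` B) <= L A + L B.
Hypothesis LT : L setT = 1.
Hypothesis Lsplit : forall K W1 W2 : set X, closed K -> open W1 -> open W2 ->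
  K `<=` W1 `|` W2 -> exists K1 K2 : set X, [/\ closed K1, closed K2, K1 `<=` W1,
    K2 `<=` W2 & K = K1 `|` K2].

Lemma Lset0 : L set0 = 0.
Proof.
have := Ladd (@closed0 X) (@closed0 X) (setI0 set0); rewrite setU0 => H; lra.
Qed.

Local Open Scope ereal_scope.

Definition lam (W : set X) : \bar R :=
  ereal_sup [set (L K)%:E | K in [set K | closed K /\ K `<=` W]].
Definition nus (A : set X) : \bar R :=
  ereal_inf [set lam W | W in [set W | open W /\ A `<=` W]].

Lemma lam_ge W K : closed K -> K `<=` W -> (L K)%:E <= lam W.
Proof. by move=> cK KW; apply: ereal_sup_ubound; exists K. Qed.

Lemma lam_le W M : (forall K, closed K -> K `<=` W -> (L K)%:E <= M) -> lam W <= M.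
Proof. by move=> H; apply: ge_ereal_sup => _ [K [cK KW] <-]; exact: H. Qed.

Lemma lam_ge0 W : 0 <= lam W.
Proof. by apply: le_trans (lam_ge closed0 (sub0set W)); rewrite Lset0. Qed.

Lemma lam_le1 W : lam W <= 1.
Proof.
apply: lam_le => K cK _; rewrite lee_fin -LT; apply: Lmono => //; exact: closedT.
Qed.

Lemma lam_mono W W' : W `<=` W' -> lam W <= lam W'.
Proof. by move=> WW'; apply: lam_le => K cK KW; apply: lam_ge => //; exact: subset_trans WW'. Qed.

Lemma lam0 : lam set0 = 0.
Proof.
apply/eqP; rewrite eq_le lam_ge0 andbT; apply: lam_le => K _; rewrite subset0 => ->.
by rewrite Lset0.
Qed.

Lemma lamT : lam setT = 1.
Proof.
by apply/eqP; rewrite eq_le lam_le1 /= -LT; apply: lam_ge => //; exact: closedT.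
Qed.

Lemma nus_le A W : open W -> A `<=` W -> nus A <= lam W.
Proof. by move=> oW AW; apply: ereal_inf_lbound; exists W. Qed.

Lemma nus_ge A M : (forall W, open W -> A `<=` W -> M <= lam W) -> M <= nus A.
Proof. by move=> H; apply: le_ereal_inf_tmp => _ [W [oW AW] <-]; exact: H. Qed.

Lemma nus_ge0 A : 0 <= nus A.
Proof. by apply: nus_ge => W _ _; exact: lam_ge0. Qed.

Lemma nus_le1 A : nus A <= 1.
Proof. by apply: le_trans (nus_le openT (subsetT A)) _; rewrite lamT. Qed.

Lemma nus_mono A B : A `<=` B -> nus A <= nus B.
Proof. by move=> AB; apply: nus_ge => W oW BW; apply: nus_le => //; exact: subset_trans BW. Qed.

Lemma nus_open W : open W -> nus W = lam W.
Proof.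
move=> oW; apply/eqP; rewrite eq_le nus_le //=.
by apply: nus_ge => W' _ WW'; exact: lam_mono.
Qed.

Lemma nus0 : nus set0 = 0.
Proof. by rewrite nus_open ?lam0 //; exact: open0. Qed.

Lemma nusT : nus setT = 1.
Proof. by rewrite nus_open ?lamT //; exact: openT. Qed.

Lemma nus_fin A : nus A \is a fin_num.
Proof. by rewrite (ge0_fin_numE (nus_ge0 A)) (le_lt_trans (nus_le1 A)) ?ltry. Qed.

Lemma open_bigU (W : nat -> set X) n : (forall i, open (W i)) ->
  open (\big[setU/set0]_(0 <= i < n) W i).
Proof.
move=> oW; elim: n => [|n IH]; first by rewrite big_geq //; exact: open0.
by rewrite big_nat_recr //=; apply: openU.
Qed.

Lemma in_bigU (W : nat -> set X) n i x : (i < n)%N -> W i x ->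
  (\big[setU/set0]_(0 <= i < n) W i) x.
Proof.
elim: n => [//|n IH] lti Wx; rewrite big_nat_recr //=.
move: lti; rewrite ltnS leq_eqVlt => /orP[/eqP ei|lt]; [by right; rewrite -ei|left; exact: IH].
Qed.

Lemma lam_fin (W : nat -> set X) n : (forall i, open (W i)) ->
  forall K, closed K -> K `<=` \big[setU/set0]_(0 <= i < n) W i ->
  (L K)%:E <= \sum_(0 <= i < n) lam (W i).
Proof.
move=> oW; elim: n => [|n IH] K cK KW.
  move: KW; rewrite !big_geq // subset0 => ->; by rewrite Lset0.
move: KW; rewrite big_nat_recr //= => KW.
have [K1 [K2 [cK1 cK2 K1W K2W KE]]] := Lsplit cK (open_bigU n oW) (oW n) KW.
rewrite big_nat_recr //=.
apply: (@le_trans _ _ ((L K1)%:E + (L K2)%:E)).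
  by rewrite -EFinD lee_fin KE; exact: Lsub.
apply: leeD; first exact: IH.
exact: lam_ge.
Qed.

Lemma lam_sigma (W : nat -> set X) : (forall i, open (W i)) ->
  lam (\bigcup_i W i) <= \sum_(0 <= i <oo) lam (W i).
Proof.
move=> oW; apply: lam_le => K cK KW.
have Kc : compact K := subclosed_compact cK XT (subsetT K).
move: Kc; rewrite compact_cover => /(_ nat setT W) [].
- by move=> i _; exact: oW.
- by move=> x /KW [i _ Wx]; exists i.
move=> D' _ KD'.
pose n := (\max_(i <- finmap.enum_fset D') i).+1.
have KB : K `<=` \big[setU/set0]_(0 <= i < n) W i.
  move=> x /KD' [i Di Wx]; apply: (@in_bigU W n i x) => //.
  by rewrite ltnS; apply: (@leq_bigmax_seq _ _ xpredT (fun i => i)).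
apply: le_trans (lam_fin oW cK KB) _.
by apply: nneseries_lim_ge => k _ _; exact: lam_ge0.
Qed.
Lemma nus_sigma : sigma_subadditive nus.
Proof.
move=> A.
suff add2e (e : {posnum R}) :
    nus (\bigcup_n A n) <= \sum_(i <oo) nus (A i) + e%:num%:E.
  by apply/lee_addgt0Pr => _/posnumP[].
rewrite (le_trans _ (epsilon_trick _ _ _))//; last by move=> n; exact: nus_ge0.
have [W HW] : {W : nat -> set X & forall n, [/\ open (W n), A n `<=` W n &
    lam (W n) <= nus (A n) + (e%:num / (2 ^ n.+1)%:R)%:E]}.
  apply: (@choice _ _ (fun n W => [/\ open W, A n `<=` W &
    lam W <= nus (A n) + (e%:num / (2 ^ n.+1)%:R)%:E])) => n.
  have en1 : (0 < e%:num / (2 ^ n.+1)%:R)%R by [].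
  have [_ [V [oV AV] <-] Vlt] := lb_ereal_inf_adherent en1 (nus_fin (A n)).
  by exists V; split => //; exact: ltW.
have oW : forall i, open (W i) by move=> i; case: (HW i).
apply: (@le_trans _ _ (lam (\bigcup_i W i))).
  apply: nus_le; first by apply: bigcup_open => i _; exact: oW.
  by move=> x [i _ Ax]; exists i => //; case: (HW i) => _ + _; apply.
apply: le_trans (lam_sigma oW) _.
apply: lee_nneseries; first by move=> i _ _; exact: lam_ge0.
by move=> i _; case: (HW i).
Qed.
HB.instance Definition _ := isOuterMeasure.Build R X nus nus0 nus_ge0
  (fun A B AB => nus_mono AB) nus_sigma.

Lemma lam_split W K1 : open W -> closed K1 -> K1 `<=` W ->
  (L K1)%:E + lam (W `&` ~` K1) <= lam W.
Proof.
move=> oW cK1 K1W.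
rewrite addeC -leeBrDr //; apply: lam_le => K2 cK2 K2W.
rewrite leeBrDl // -EFinD -Ladd //.
- apply: lam_ge; first exact: closedU.
  by move=> x [/K1W|/K2W []].
- by apply/seteqP; split => x // [K1x /K2W [_]].
Qed.

Lemma cara_ineq W A : open W -> open A ->
  lam (W `&` A) + nus (W `&` ~` A) <= lam W.
Proof.
move=> oW oA.
rewrite -leeBrDr ?nus_fin //; apply: lam_le => K1 cK1 K1WA.
rewrite leeBrDr ?nus_fin //.
apply: le_trans (lam_split oW cK1 (fun x Hx => (K1WA x Hx).1)).
apply: leeD => //; apply: nus_le.
  by apply: openI => //; rewrite openC.
by move=> x [Wx nAx]; split => // /K1WA [].
Qed.

Lemma cara_open A : open A -> caratheodory_measurable nus A.
Proof.
move=> oA; apply: (@le_caratheodory_measurable _ _ nus) => Y.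
apply: nus_ge => W oW YW.
apply: le_trans (cara_ineq oW oA); apply: leeD.
  rewrite -nus_open ?(openI oW oA) //.
  exact: (nus_mono (@setSI _ A _ _ YW)).
  exact: openI.
exact: (nus_mono (@setSI _ (~` A) _ _ YW)).
Qed.
Lemma borel_cara (A : set (borel X)) : measurable A -> caratheodory_measurable nus A.
Proof.
apply: smallest_sub; last by move=> W oW; exact: cara_open.
split.
- exact: (caratheodory_measurable_set0 nus).
- by move=> B cB; rewrite setTD; exact: (caratheodory_measurable_setC cB).
- by move=> F cF; exact: (caratheodory_measurable_bigcup cF).
Qed.

Definition nuB : set (borel X) -> \bar R := nus.

Lemma nuB0 : nuB set0 = 0. Proof. exact: nus0. Qed.
Lemma nuB_ge0 A : 0 <= nuB A. Proof. exact: nus_ge0. Qed.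
Lemma nuB_sigma : semi_sigma_additive nuB.
Proof.
move=> F mF tF mU.
exact: (@caratheodory_measure_sigma_additive R X nus F
  (fun i => borel_cara (mF i)) tF (borel_cara mU)).
Qed.

HB.instance Definition _ := isMeasure.Build _ _ _ nuB nuB0 nuB_ge0 nuB_sigma.
HB.instance Definition _ := Measure_isProbability.Build _ _ _ nuB nusT.

Section Inv.
Variables h g : X -> X.
Hypotheses (hg : cancel h g) (gh : cancel g h) (hc : continuous h) (gc : continuous g).
Hypothesis Linv : forall K, closed K -> L (h @^-1` K) = L K.

Lemma lam_inv W : lam (h @^-1` W) = lam W.
Proof.
apply/eqP; rewrite eq_le; apply/andP; split.
- apply: lam_le => K cK KW.
  have cgK : closed (g @^-1` K) by apply: preimage_closed => // x _; exact: gc.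
  have -> : K = h @^-1` (g @^-1` K).
    by apply/seteqP; split => x /=; rewrite hg.
  rewrite Linv //; apply: lam_ge => // y /= Ky.
  by have := KW _ Ky; rewrite /= gh.
- apply: lam_le => K cK KW.
  have chK : closed (h @^-1` K) by apply: preimage_closed => // x _; exact: hc.
  by rewrite -Linv //; apply: lam_ge => // x /KW.
Qed.

Lemma nus_inv A : nus (h @^-1` A) = nus A.
Proof.
apply/eqP; rewrite eq_le; apply/andP; split.
- apply: nus_ge => W oW AW; rewrite -lam_inv; apply: nus_le.
    by move: oW; apply: (proj1 (continuousP h) hc).
  by move=> x /AW.
- apply: nus_ge => W oW AW.
  have -> : W = h @^-1` (g @^-1` W) by apply/seteqP; split => x /=; rewrite hg.
  rewrite lam_inv; apply: nus_le.
    by move: oW; apply: (proj1 (continuousP g) gc).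
  by move=> x Ax; apply: AW; rewrite /= gh.
Qed.
End Inv.

Definition nuP : probability (borel X) R := nuB.
Lemma nuPE (A : set X) : nuP A = nus A. Proof. by []. Qed.
End Construction.
Import numFieldNormedType.Exports.
Section Limit.
Context (R : realType) (X : Type) (I : Type) (F : set_system I) (FF : ProperFilter F)
  (sq : I -> set X -> R).
Local Notation T := (@prod_topology (set X) (fun _ : set X => R)).
Hypothesis sq01 : forall i A, 0 <= sq i A <= 1.

Lemma cluster_pt : exists Lf : T, forall S : set T,
  closed S -> F (sq @^-1` S) -> S Lf.
Proof.
have cD : compact ([set f : T | forall A, `[0, 1]%classic (f A)]).
  exact: (@tychonoff _ (fun _ : set X => R) (fun _ => `[0, 1]%classic) (fun=> @segment_compact R 0 1)).
have [] := cD ((sq : I -> T) @ F) _ _.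
  by apply: (@filterE I F) => i A /=; rewrite in_itv /=; exact: sq01.
move=> Lf [_ cl]; exists Lf => S cS FS.
apply: contrapT => nSL.
have oC : open (~` S) by rewrite openC.
have [x [Sx nSx]] := cl S (~` S) FS (open_nbhs_nbhs (conj oC nSL)).
by apply: nSx.
Qed.

Lemma closed_ge_fun (phi : T -> R) (c : R) :
  continuous phi -> closed [set f | c <= phi f].
Proof.
move=> cphi; apply: (@preimage_closed _ _ phi [set x | c <= x]).
  by move=> f _; exact: cphi.
exact: closed_ge.
Qed.

Lemma closed_eq_fun (phi : T -> R) (c : R) :
  continuous phi -> closed [set f | phi f = c].
Proof.
move=> cphi; apply: (@preimage_closed _ _ phi [set x | x = c]).
  by move=> f _; exact: cphi.
exact: closed_eq.
Qed.

Lemma proj_cont (a : set X) : continuous (fun f : T => f a).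
Proof. exact: (@proj_continuous _ (fun _ : set X => R) a). Qed.

Lemma cont_B (a b : set X) : continuous (fun f : T => f a - f b).
Proof. by move=> f; apply: continuousB; apply: proj_cont. Qed.

Lemma cont_BD (a b c : set X) : continuous (fun f : T => f a - (f b + f c)).
Proof.
move=> f; apply: (@continuousB _ _ _ (fun f : T => f a) (fun f : T => f b + f c)).
  exact: proj_cont.
by apply: (@continuousD _ _ _ (fun f : T => f b) (fun f : T => f c)); apply: proj_cont.
Qed.

Lemma cont_DB (a b c : set X) : continuous (fun f : T => (f a + f b) - f c).
Proof.
move=> f; apply: (@continuousB _ _ _ (fun f : T => f a + f b) (fun f : T => f c)).
  by apply: (@continuousD _ _ _ (fun f : T => f a) (fun f : T => f b)); apply: proj_cont.
exact: proj_cont.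
Qed.

End Limit.
Section Main.
Context (R : realType) (X : pseudoPMetricType R) (h g : X -> X).
Hypotheses (Xh : hausdorff_space X) (XT : compact [set: X])
  (hom : is_homeo h g) (tsbp : TSBP h g).

Lemma open_meas (A : set X) : open A -> measurable (A : set (borel X)).
Proof. by move=> oA; apply: sub_sigma_algebra. Qed.

Lemma closed_meas (A : set X) : closed A -> measurable (A : set (borel X)).
Proof.
move=> cA; rewrite -(setCK A); apply: measurableC; apply: open_meas.
by rewrite openC.
Qed.

Lemma closed_compact (A : set X) : closed A -> compact A.
Proof. by move=> cA; exact: (subclosed_compact cA XT (subsetT A)). Qed.

Lemma sep (A B : set X) : closed A -> closed B -> A `&` B = set0 ->
  exists U V : set X, [/\ open U /\ open V, A `<=` U, B `<=` V,
      closure U `&` closure V = set0 & topo_small h g (boundary U)].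
Proof. by move=> cA cB AB; apply: tsbp => //; exact: closed_compact. Qed.

Lemma split_closed (K W1 W2 : set X) : closed K -> open W1 -> open W2 ->
  K `<=` W1 `|` W2 -> exists K1 K2 : set X, [/\ closed K1, closed K2, K1 `<=` W1,
    K2 `<=` W2 & K = K1 `|` K2].
Proof.
move=> cK oW1 oW2 KW.
have cA : closed (K `&` ~` W2) by apply: closedI => //; rewrite closedC.
have cB : closed (K `&` ~` W1) by apply: closedI => //; rewrite closedC.
have AB : (K `&` ~` W2) `&` (K `&` ~` W1) = set0.
  apply/seteqP; split => x // [[Kx nW2] [_ nW1]].
  by case: (KW x Kx).
have [U [V [[oU oV] AU BV cUV _]]] := sep cA cB AB.
have UV : U `&` V = set0.
  apply/seteqP; split => x // [Ux Vx].
  by rewrite -cUV; split; apply: subset_closure.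
exists (K `&` ~` V), (K `&` ~` U); split.
- by apply: closedI => //; rewrite closedC.
- by apply: closedI => //; rewrite closedC.
- move=> x [Kx nVx]; apply: contrapT => nW1x; apply: nVx; exact: BV.
- move=> x [Kx nUx]; apply: contrapT => nW2x; apply: nUx; exact: AU.
- apply/seteqP; split => x; last by case=> -[].
  move=> Kx; case: (pselect (V x)) => Vx; last by left.
  right; split => // Ux.
  by have : (U `&` V) x by []; rewrite UV.
Qed.

Local Notation T := (@prod_topology (set X) (fun _ : set X => R)).

Lemma KL (C : set X) (e : R) : closed C -> universally_null R h C -> 0 < e ->
  exists W : set X, [/\ open W, C `<=` W & forall mu : probability (borel X) R,
    invariant_prob h mu -> (mu (W : set (borel X)) < e%:E)%E].
Proof.
move=> cC [mC Cnull] e0.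
apply: contrapT => nKL.
have H : forall W : set X, open W -> C `<=` W -> exists mu : probability (borel X) R,
    invariant_prob h mu /\ (e%:E <= mu W)%E.
  move=> W oW CW; apply: contrapT => nex; apply: nKL; exists W; split => // mu imu.
  rewrite ltNge; apply/negP => le; apply: nex; exists mu; split => //.
have [mus Hmus] : {mus : set X -> probability (borel X) R & forall W, open W ->
    C `<=` W -> invariant_prob h (mus W) /\ (e%:E <= mus W W)%E}.
  apply: (@choice _ _ (fun W mu => open W -> C `<=` W ->
    invariant_prob h mu /\ (e%:E <= mu W)%E)) => W.
  case: (pselect (open W /\ C `<=` W)) => [[oW CW]|nW].
    by have [mu Hmu] := H W oW CW; exists mu.
  have [mu _] := H setT openT (subsetT C); exists mu => oW CW.
  by exfalso; apply: nW.
pose Df := [set W : set X | open W /\ C `<=` W].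
pose Bf := fun W : set X => [set W' : set X | open W' /\ C `<=` W' /\ W' `<=` W].
pose F := filter_from Df Bf.
have FF : ProperFilter F.
  apply: filter_from_proper.
    apply: filter_from_filter; first by exists setT; split => //; exact: openT.
    move=> W1 W2 [oW1 CW1] [oW2 CW2]; exists (W1 `&` W2).
      split; first exact: openI.
      by move=> x Cx; split; [exact: CW1|exact: CW2].
    move=> W' [oW' [CW' W'W]]; split; split => //; split => //.
      by move=> x /W'W [].
    by move=> x /W'W [].
  by move=> W [oW CW]; exists W; split => //; split.
have FD : forall P : set (set X), (forall W, open W -> C `<=` W -> P W) -> F P.
  move=> P HP; exists setT; first by split => //; exact: openT.
  by move=> W [oW [CW _]]; exact: HP.
pose sq (W : set X) (A : set X) : R :=
  if `[< measurable (A : set (borel X)) >] then fine (mus W A) else 0.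
have finm : forall W (A : set X), measurable (A : set (borel X)) ->
    mus W A \is a fin_num.
  by move=> W A mA; exact: fin_num_measure.
have sq01 : forall W A, 0 <= sq W A <= 1.
  move=> W A; rewrite /sq; case: ifPn => mA; last by rewrite lexx ler01.
  have mA' : measurable (A : set (borel X)) by apply/asboolP.
  apply/andP; split; first by apply: fine_ge0; exact: measure_ge0.
  by rewrite -lee_fin fineK ?finm //; exact: probability_le1.
have sqE : forall W A, closed A -> sq W A = fine (mus W A).
  by move=> W A cA; rewrite /sq asboolT //; exact: closed_meas.
have [Lf HL] := @cluster_pt R X (set X) F FF sq sq01.
have mW : forall W (A : set X), measurable (A : set (borel X)) -> (0 <= fine (mus W A))%R.
  by move=> W A mA; apply: fine_ge0; exact: measure_ge0.
have L0 : forall K, closed K -> 0 <= Lf K.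
  move=> K cK; apply: (HL _ (closed_ge_fun (c := 0) (proj_cont (a := K)))).
  by apply: filterE => W /=; rewrite sqE //; apply: mW; exact: closed_meas.
have Lmono : forall A B, closed A -> closed B -> A `<=` B -> Lf A <= Lf B.
  move=> A B cA cB AB; rewrite -subr_ge0.
  apply: (HL _ (closed_ge_fun (c := 0) (cont_B (a := B) (b := A)))).
  apply: filterE => W /=; rewrite !sqE // subr_ge0.
  apply: fine_le; rewrite ?finm //; try exact: closed_meas.
  by apply: le_measure => //; rewrite inE; exact: closed_meas.
have Ladd : forall A B, closed A -> closed B -> A `&` B = set0 ->
    Lf (A `|` B) = Lf A + Lf B.
  move=> A B cA cB AB; apply/eqP; rewrite -subr_eq0; apply/eqP.
  apply: (HL _ (closed_eq_fun (c := 0) (cont_BD (a := A `|` B) (b := A) (c := B)))).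
  apply: filterE => W /=; rewrite !sqE //; last exact: closedU.
  rewrite measureU //; try exact: closed_meas.
  by rewrite fineD ?finm ?subrr //; exact: closed_meas.
have Lsub : forall A B, closed A -> closed B -> Lf (A `|` B) <= Lf A + Lf B.
  move=> A B cA cB; rewrite -subr_ge0.
  apply: (HL _ (closed_ge_fun (c := 0) (cont_DB (a := A) (b := B) (c := A `|` B)))).
  apply: filterE => W /=; rewrite !sqE //; last exact: closedU.
  rewrite subr_ge0 -fineD ?finm //; try exact: closed_meas.
  apply: fine_le; rewrite ?finm //; try exact: closed_meas.
    by apply: measurableU; exact: closed_meas.
    by rewrite fin_numD !finm //; exact: closed_meas.
  by apply: measureU2; exact: closed_meas.
have LT : Lf setT = 1.
  apply: (HL _ (closed_eq_fun (c := 1) (proj_cont (a := setT)))).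
  apply: filterE => W /=; rewrite sqE; last exact: closedT.
  by rewrite probability_setT.
have [hg [gh [hc gc]]] := hom.
have Linv : forall K, closed K -> Lf (h @^-1` K) = Lf K.
  move=> K cK.
  have chK : closed (h @^-1` K) by apply: preimage_closed => // x _; exact: hc.
  apply/eqP; rewrite -subr_eq0; apply/eqP.
  apply: (HL _ (closed_eq_fun (c := 0) (cont_B (a := h @^-1` K) (b := K)))).
  apply: FD => W oW CW /=; rewrite !sqE //.
  have [inv _] := Hmus W oW CW.
  by rewrite inv ?subrr //; exact: closed_meas.
have key : forall W, open W -> C `<=` W -> exists2 K, closed K /\ K `<=` W & e <= Lf K.
  move=> W oW CW.
  have cnW : closed (~` W) by rewrite closedC.
  have CnW : C `&` ~` W = set0.
    by apply/seteqP; split => x // [/CW Wx]; apply.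
  have [U [V [[oU oV] CU nWV cUV _]]] := sep cC cnW CnW.
  exists (closure U); first split; first exact: closed_closure.
    move=> x cUx; apply: contrapT => nWx.
    have : (closure U `&` closure V) x.
      by split => //; apply: subset_closure; exact: nWV.
    by rewrite cUV.
  apply: (HL _ (closed_ge_fun (c := e) (proj_cont (a := closure U)))).
  exists U; first by split.
  move=> W' [oW' [CW' W'U]] /=; rewrite sqE; last exact: closed_closure.
  have [_ eW'] := Hmus W' oW' CW'.
  have mcU : measurable (closure U : set (borel X)) by apply: closed_meas; exact: (@closed_closure _ U).
  have le1 : (e%:E <= mus W' (closure U))%E.
    apply: le_trans eW' _; apply: le_measure; rewrite ?inE //.
    - exact: open_meas.
    - by move=> x W'x; apply: subset_closure; exact: W'U.
  by rewrite -lee_fin (fineK (finm W' _ mcU)).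
pose nu := nuP XT (L := Lf) Lmono Ladd Lsub LT split_closed.
have inv_nu : invariant_prob h nu.
  by move=> A mA; rewrite !nuPE; exact: (nus_inv hg gh hc gc Linv A).
have := Cnull nu inv_nu; rewrite nuPE => nC0.
have : (e%:E <= nus Lf C)%E.
  apply: nus_ge => W0 oW0 CW0; have [K [cK KW] eK] := key W0 oW0 CW0.
  by apply: le_trans (lam_ge Lf cK KW); rewrite lee_fin.
by rewrite nC0 lee_fin leNgt e0.
Qed.
Lemma closed_boundary (A : set X) : closed (boundary A).
Proof.
rewrite /boundary setDE; apply: closedI; first exact: closed_closure.
by rewrite closedC; exact: open_interior.
Qed.

Lemma meas_le (mu : probability (borel X) R) (A B : set X) :
  measurable (A : set (borel X)) -> measurable (B : set (borel X)) ->
  A `<=` B -> (mu A <= mu B)%E.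
Proof. by move=> mA mB AB; apply: le_measure => //; rewrite inE. Qed.

Lemma part2 (U F : set X) (e : R) : 0 < e -> open U -> closed F -> F `<=` U ->
  universally_null R h (boundary F) ->
  exists V : set X, [/\ open V, F `<=` V, closure V `<=` U,
    topo_small h g (boundary V) &
    forall mu : probability (borel X) R, invariant_prob h mu ->
      (mu (V `\` F : set (borel X)) < e%:E)%E].
Proof.
move=> e0 oU cF FU nF.
have [W [oW bW Wsmall]] := KL (closed_boundary (A := F)) nF e0.
pose Ob := U `&` (interior F `|` W).
have oO : open Ob by apply: openI => //; apply: openU => //; exact: open_interior.
have cK' : closed (~` Ob) by rewrite closedC.
have FK' : F `&` ~` Ob = set0.
  apply/seteqP; split => x // [Fx nOx]; apply: nOx; split; first exact: FU.
  case: (pselect (interior F x)) => iFx; first by left.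
  right; apply: bW; split => //; exact: subset_closure.
have [V [V0 [[oV oV0] FV K'V0 cVV0 sV]]] := sep cF cK' FK'.
have cVO : closure V `<=` Ob.
  move=> x cVx; apply: contrapT => nOx.
  have : (closure V `&` closure V0) x.
    by split => //; apply: subset_closure; exact: K'V0.
  by rewrite cVV0.
exists V; split => //.
- by move=> x /cVO [].
- move=> mu imu; apply: le_lt_trans (Wsmall mu imu).
  apply: meas_le.
  + by rewrite setDE; apply: measurableI; [exact: open_meas | apply: measurableC; exact: closed_meas].
  + exact: open_meas.
  + move=> x [Vx nFx]; have := cVO x (subset_closure Vx).
    by case=> _ [/interior_subset //|].
Qed.

Lemma part1 (U : set X) (e : R) : 0 < e -> open U ->
  universally_null R h (boundary U) ->
  exists V : set X, [/\ open V, closure V `<=` U, topo_small h g (boundary V) &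
       forall mu : probability (borel X) R, invariant_prob h mu ->
         (mu (U `\` closure V : set (borel X)) < e%:E)%E].
Proof.
move=> e0 oU nU.
have [W [oW bW Wsmall]] := KL (closed_boundary (A := U)) nU e0.
pose K := closure U `&` ~` W.
have cK : closed K by apply: closedI; [exact: closed_closure | rewrite closedC].
have cnU : closed (~` U) by rewrite closedC.
have KU : K `<=` U.
  move=> x [cUx nWx]; apply: contrapT => nUx; apply: nWx; apply: bW; split => //.
  by move=> /interior_subset.
have KnU : K `&` ~` U = set0.
  by apply/seteqP; split => x // [/KU Ux]; apply.
have [V [V0 [[oV oV0] KV nUV0 cVV0 sV]]] := sep cK cnU KnU.
have cVU : closure V `<=` U.
  move=> x cVx; apply: contrapT => nUx.
  have : (closure V `&` closure V0) x.
    by split => //; apply: subset_closure; exact: nUV0.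
  by rewrite cVV0.
exists V; split => // mu imu.
apply: le_lt_trans (Wsmall mu imu); apply: meas_le.
- rewrite setDE; apply: measurableI; first exact: open_meas.
  by apply: measurableC; apply: closed_meas; exact: closed_closure.
- exact: open_meas.
- move=> x [Ux ncVx]; apply: contrapT => nWx; apply: ncVx.
  apply: subset_closure; apply: KV; split => //; exact: subset_closure.
Qed.
End Main.

Unset Implicit Arguments.
Theorem corollary4p10 (R : realType) (X : pseudoPMetricType R) (h g : X -> X)
  (eps : R) :
  hausdorff_space X -> compact [set: X] -> infinite_set [set: X] ->
  is_homeo h g -> minimal_homeo h g -> TSBP h g -> 0 < eps ->
  (* (1) *)
  (forall U : set X, open U -> universally_null R h (boundary U) ->
     exists V : set X, [/\ open V, closure V `<=` U, topo_small h g (boundary V) &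
       forall mu : probability (borel X) R, invariant_prob h mu ->
         (mu (U `\` closure V : set (borel X)) < eps%:E)%E]) /\
  (* (2) *)
  (forall U F : set X, open U -> closed F -> F `<=` U ->
     universally_null R h (boundary F) ->
     exists V : set X, [/\ open V, F `<=` V, closure V `<=` U,
       topo_small h g (boundary V) &
       forall mu : probability (borel X) R, invariant_prob h mu ->
         (mu (V `\` F : set (borel X)) < eps%:E)%E]) /\
  (* (3) *)
  (forall F : set X, closed F -> universally_null R h (boundary F) ->
     exists V : set X, [/\ open V, F `<=` V, topo_small h g (boundary V) &
       forall mu : probability (borel X) R, invariant_prob h mu ->
         (mu (V `\` F : set (borel X)) < eps%:E)%E]).
Proof.
move=> _ XT _ hom _ tsbp e0; split; [|split].
- by move=> U oU nU; exact: (part1 XT hom tsbp e0 oU nU).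
- by move=> U F oU cF FU nF; exact: (part2 XT hom tsbp e0 oU cF FU nF).
- move=> F cF nF.
  have [V [oV FV _ sV Hmu]] := part2 XT hom tsbp e0 openT cF (subsetT F) nF.
  by exists V; split.
Qed.
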